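(* Let $R$ be a UFD with field of fractions $K$. Let $U \in R[X,Y]$ (polynomial ring in two variables) be such that $K[X,Y] = K[U]^{[1]}$. Then $K[U] \cap R[X,Y]$ is an inert subring of $R[X,Y]$, and $K[U] \cap R[X,Y] = R[W]$ for some element $W \in R[X,Y]$ which is transcendental over $R$ and satisfies $K[W] = K[U]$.
   Context: A subring $D$ of an integral domain $A$ is called inert if whenever $x, y \in A$ with $xy \in D \setminus \{0\}$, then $x, y \in D$. For a subring $C \subseteq D$, $D = C^{[1]}$ means $D = C[T]$ for some $T \in D$ transcendental over $C$. *)

(* Defs.v *)
From HB Require Import structures.
From mathcomp Require Import all_boot all_order all_algebra all_fingroup.
Set Implicit Arguments. Unset Strict Implicit. Unset Printing Implicit Defensive.
Import GRing.Theory.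
Local Open Scope ring_scope.

Definition irreducible_elt (R : idomainType) (x : R) : Prop :=
  [/\ x != 0, x \isn't a GRing.unit &
      forall a b : R, x = a * b -> a \is a GRing.unit \/ b \is a GRing.unit].

Definition associated (R : idomainType) (a b : R) : Prop :=
  exists2 u : R, u \is a GRing.unit & a = u * b.

Definition is_UFD (R : idomainType) : Prop :=
  (forall x : R, x != 0 -> x \isn't a GRing.unit ->
     exists s : seq R, (forall y, y \in s -> irreducible_elt y) /\
                       x = \prod_(y <- s) y) /\
  (forall s t : seq R,
     (forall y, y \in s -> irreducible_elt y) ->
     (forall y, y \in t -> irreducible_elt y) ->
     \prod_(y <- s) y = \prod_(y <- t) y ->
     size s = size t /\
     exists sigma : 'S_(size s), forall i : 'I_(size s),
        associated (nth 0 s i) (nth 0 t (sigma i))).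

Definition coefs_in (A : comNzRingType) (C : A -> Prop) (p : {poly A}) : Prop :=
  forall i : nat, C p`_i.

Definition adjoin (A : comNzRingType) (C : A -> Prop) (t : A) : A -> Prop :=
  fun a => exists2 p : {poly A}, coefs_in C p & a = p.[t].

Definition transcendental_over (A : comNzRingType) (C : A -> Prop) (t : A) : Prop :=
  forall p : {poly A}, coefs_in C p -> p.[t] = 0 -> p = 0.

(* D = C^[1] : D = C[T] for some T transcendental over C *)
Definition is_poly_ring_over (A : comNzRingType) (C : A -> Prop) (D : A -> Prop) : Prop :=
  exists T : A, (forall a, D a <-> adjoin C T a) /\ transcendental_over C T.

Definition inert_subring (A : idomainType) (D : A -> Prop) : Prop :=
  [/\ D 1, (forall x y, D x -> D y -> D (x - y)),
      (forall x y, D x -> D y -> D (x * y)) &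
      (forall x y : A, D (x * y) -> x * y != 0 -> D x /\ D y)].

(* ---- Bivariate polynomial rings: R[X,Y] := {poly {poly R}} ---- *)
Definition const2 (R : nzRingType) (r : R) : {poly {poly R}} := r%:P%:P.

Definition consts2 (R : nzRingType) : {poly {poly R}} -> Prop :=
  fun a => exists r : R, a = const2 r.

Definition embed2 (R : idomainType) (f : {poly {poly R}}) :
  {poly {poly {fraction R}}} := map_poly (map_poly (@tofrac R)) f.

(* Main.v *)
Require Import Defs.
From HB Require Import structures.
From mathcomp Require Import all_boot all_order all_algebra all_fingroup.
From mathcomp Require Import generic_quotient.
From Stdlib Require Import Classical.
From mathcomp Require Import zify ring.
Set Implicit Arguments. Unset Strict Implicit. Unset Printing Implicit Defensive.
Import GRing.Theory.
Local Open Scope ring_scope.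
Definition cmap (S : comNzRingType) (p : {poly S}) : {poly {poly {poly S}}} :=
  map_poly polyC (map_poly polyC p).

Lemma cmapE (S : comNzRingType) (p : {poly S}) t :
  (cmap p).[t] = (map_poly polyC p) \Po t.
Proof. by []. Qed.

Lemma coef_cmap (S : comNzRingType) (p : {poly S}) i : (cmap p)`_i = const2 p`_i.
Proof. by rewrite /cmap !coef_map. Qed.

Lemma cmap_coefs (S : comNzRingType) (p : {poly S}) : coefs_in (@consts2 S) (cmap p).
Proof. by move=> i; exists p`_i; rewrite coef_cmap. Qed.

Lemma coefs_cmap (S : comNzRingType) (P : {poly {poly {poly S}}}) :
  coefs_in (@consts2 S) P -> P = cmap (map_poly (fun a : {poly {poly S}} => a`_0`_0) P).
Proof.
move=> hP; apply/polyP => i; rewrite coef_cmap coef_map_id0 ?coef0 //.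
by have [r ->] := hP i; rewrite /const2 !coefC.
Qed.

Lemma adjoin_constsP (S : comNzRingType) (t a : {poly {poly S}}) :
  adjoin (@consts2 S) t a <-> exists p, a = (cmap p).[t].
Proof.
split.
  by case=> P /coefs_cmap -> ->; eexists.
by case=> p ->; exists (cmap p) => //; apply: cmap_coefs.
Qed.

Lemma cmapMXaddC (S : comNzRingType) (p : {poly S}) c :
  cmap (p * 'X + c%:P) = cmap p * 'X + (const2 c)%:P.
Proof. by rewrite /cmap !rmorphD !rmorphM /= !map_polyX !map_polyC. Qed.

Lemma cmapD (S : comNzRingType) (p q : {poly S}) : cmap (p + q) = cmap p + cmap q.
Proof. by rewrite /cmap !rmorphD. Qed.
Lemma cmapN (S : comNzRingType) (p : {poly S}) : cmap (- p) = - cmap p.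
Proof. by rewrite /cmap !rmorphN. Qed.
Lemma cmapM (S : comNzRingType) (p q : {poly S}) : cmap (p * q) = cmap p * cmap q.
Proof. by rewrite /cmap !rmorphM. Qed.
Lemma cmapC (S : comNzRingType) (c : S) : cmap c%:P = (const2 c)%:P.
Proof. by rewrite /cmap !map_polyC. Qed.

Lemma horner_cmap_morph (S S' : comNzRingType) (h : {rmorphism S -> S'})
  (f : {poly {poly S}} -> {poly {poly S'}})
  (fD : forall x y, f (x + y) = f x + f y) (fM : forall x y, f (x * y) = f x * f y)
  (fC : forall r, f (const2 r) = const2 (h r)) p t :
  f ((cmap p).[t]) = (cmap (map_poly h p)).[f t].
Proof.
elim/poly_ind: p => [|p c IH].
  rewrite /cmap !rmorph0 !horner0.
  by apply/(addrI (f 0)); rewrite -fD !addr0.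
rewrite cmapMXaddC hornerMXaddC fD fM IH fC rmorphD rmorphM /= map_polyX map_polyC.
by rewrite cmapMXaddC hornerMXaddC.
Qed.

Lemma horner_cmap_const (S : comNzRingType) (p : {poly S}) k :
  (cmap p).[const2 k] = const2 p.[k].
Proof. by rewrite /cmap /const2 !horner_map. Qed.

Lemma comp_eq0 (S : idomainType) (p q : {poly S}) : (1 < size q)%N -> p \Po q = 0 -> p = 0.
Proof.
move=> hq h0.
have := size_comp_poly p q; rewrite h0 size_poly0 /=.
move/esym/eqP; rewrite muln_eq0 => /orP [].
  move=> hp; have hp1 : (size p <= 1)%N by case: (size p) hp => [|[]].
  by move: h0; rewrite [p]size1_polyC // comp_polyC => ->.
by case: (size q) hq => [|[]].
Qed.

Lemma transc_nonconst (S : idomainType) (W : {poly {poly S}}) :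
  W != const2 (W`_0`_0) -> forall q, (cmap q).[W] = 0 -> q = 0.
Proof.
move=> hW q; rewrite cmapE.
have [hs|hs] := leqP (size W) 1.
  move: hW; rewrite [W]size1_polyC // comp_polyCr coefC /= => hw.
  move/eqP; rewrite polyC_eq0 => /eqP.
  rewrite -/(comp_poly _ _) => /comp_eq0; apply.
  rewrite ltnNge; apply/negP => /size1_polyC hw1.
  by move: hw; rewrite /const2 -hw1 eqxx.
move/comp_eq0 => /(_ hs) /eqP; rewrite map_polyC_eq0 => /eqP //.
Qed.

Lemma no_two (K : idomainType) (T : {poly {poly K}}) (P0 Q0 : {poly K}) :
  (cmap P0).[T] = 'X%:P -> (cmap Q0).[T] = 'X -> False.
Proof.
rewrite !cmapE => hP hQ.
have dP := congr1 deriv hP; have dQ := congr1 deriv hQ.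
rewrite deriv_comp derivC deriv_map in dP.
rewrite deriv_comp derivX deriv_map in dQ.
have hT : T^`() != 0.
  by apply/eqP => h0; move: dQ; rewrite h0 mulr0 => /eqP; rewrite eq_sym oner_eq0.
have h1 : (P0^`())^:P \Po T = 0.
  by apply/eqP; move/eqP: dP; rewrite mulf_eq0 (negbTE hT) orbF.
have sP := congr1 (@swapXY K) hP; have s1 := congr1 (@swapXY K) h1.
rewrite swapXY_comp_poly swapXY_Y in sP.
rewrite swapXY_comp_poly raddf0 in s1.
have := congr1 deriv sP; rewrite deriv_comp deriv_map s1 mul0r derivX.
by move/eqP; rewrite eq_sym oner_eq0.
Qed.

Lemma inert_adj (A : idomainType) (C : A -> Prop) (C0 : C 0)
  (CD : forall x y, C x -> C y -> C (x + y)) (CN : forall x, C x -> C (- x))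
  (CM : forall x y, C x -> C y -> C (x * y)) T (hT : transcendental_over C T)
  a b : adjoin C T a -> adjoin C T b -> C (a * b) -> a * b != 0 -> C a /\ C b.
Proof.
case=> P hP ->; case=> Q hQ -> hab nz.
have hPQ : coefs_in C (P * Q - (P.[T] * Q.[T])%:P).
  move=> i; rewrite coefB coefC; apply: (CD); last apply: (CN).
    rewrite coefM; apply: (@big_ind _ C) => // j _; exact: CM.
  by case: (i == 0%N).
have e : P * Q = (P.[T] * Q.[T])%:P.
  by apply/eqP; rewrite -subr_eq0; apply/eqP; apply: hT => //; rewrite hornerD hornerN hornerC hornerM subrr.
have nP : P != 0 by apply: contraNneq nz => ->; rewrite horner0 mul0r.
have nQ : Q != 0 by apply: contraNneq nz => ->; rewrite horner0 mulr0.
have := size_mul nP nQ; rewrite e size_polyC nz => hs.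
have gP : (0 < size P)%N by rewrite size_poly_gt0.
have gQ : (0 < size Q)%N by rewrite size_poly_gt0.
have hs2 : ((size P + size Q).-1 = 1)%N by rewrite -hs.
have sP : (size P <= 1)%N by lia.
have sQ : (size Q <= 1)%N by lia.
by rewrite [P]size1_polyC // [Q]size1_polyC // !hornerC.
Qed.

Definition dvd (S : comNzRingType) (a b : S) := exists c, b = a * c.
Definition prime_elt (S : comNzRingType) (p : S) :=
  p != 0 /\ forall a b, dvd p (a * b) -> dvd p a \/ dvd p b.

Lemma dvdC_coef (S : comNzRingType) (p : S) (F : {poly S}) :
  dvd p%:P F <-> forall i, dvd p F`_i.
Proof.
split.
  by case=> G -> i; exists G`_i; rewrite coefCM.
move=> h.
have ex i : exists c, F`_i == p * c by have [c ->] := h i; exists c.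
exists (\poly_(i < size F) xchoose (ex i)).
apply/polyP => j; rewrite coefCM coef_poly.
case: ltnP => hj; first by apply/eqP; exact: (xchooseP (ex j)).
by rewrite mulr0 nth_default.
Qed.

Lemma poly_dec (S : comNzRingType) (a : {poly S}) :
  exists a1, a = a1 * 'X + (a`_0)%:P.
Proof.
elim/poly_ind: a => [|a c _]; first by exists 0; rewrite mul0r add0r coef0.
by exists a; rewrite coefD coefMX coefC /= add0r.
Qed.

Lemma dvd0 (S : comNzRingType) (p : S) : dvd p 0.
Proof. by exists 0; rewrite mulr0. Qed.

Lemma gauss (S : idomainType) (p : S) : prime_elt p -> prime_elt (p%:P).
Proof.
case=> p0 pp.
have key : forall n (a b : {poly S}), (size a + size b <= n)%N -> dvd p%:P (a * b) ->
    ~ dvd p%:P a -> ~ dvd p%:P b -> False.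
  elim=> [|n IH] a b.
    rewrite leqn0 addn_eq0 size_poly_eq0 => /andP [/eqP -> _] _ na _.
    by apply: na; apply: dvd0.
  have half : forall (a b : {poly S}), (size a + size b <= n.+1)%N -> dvd p%:P (a * b) ->
      ~ dvd p%:P a -> ~ dvd p%:P b -> dvd p a`_0 -> False.
    move=> {}a {}b hs hab na nb [c0 hc0].
    have [a1 ea] := poly_dec a.
    have na1 : ~ dvd p%:P a1.
      case=> g hg; apply: na; exists (g * 'X + c0%:P).
      by rewrite ea hg hc0 mulrDr polyCM mulrA.
    have a1n0 : a1 != 0 by apply/eqP => h; apply: na1; rewrite h; apply: dvd0.
    have sa : size a = (size a1).+1 by rewrite ea size_MXaddC (negbTE a1n0).
    apply: (IH a1 b) => //; first by move: hs; rewrite sa addSn.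
    apply/dvdC_coef => i.
    move/dvdC_coef: hab => /(_ i.+1) [x hx].
    exists (x - c0 * b`_i.+1).
    move: hx; rewrite {1}ea mulrDl coefD mulrAC coefMX /= coefCM hc0 => hx.
    by rewrite mulrBr -hx mulrA addrK.
  move=> hs hab na nb.
  case: (classic (dvd p a`_0)) => ha0; first exact: (half a b).
  case: (classic (dvd p b`_0)) => hb0.
    by apply: (half b a) => //; [rewrite addnC | rewrite mulrC].
  move/dvdC_coef: hab => /(_ 0%N); rewrite coef0M => /pp.
  by case.
split; first by rewrite polyC_eq0.
move=> a b hab; apply: NNPP => hn.
apply: (key (size a + size b)%N a b) => // [ha|hb]; apply: hn; [left|right] => //.
Qed.

Lemma irr_unit (R : idomainType) (p u : R) :
  irreducible_elt p -> u \is a GRing.unit -> irreducible_elt (p * u).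
Proof.
case=> p0 pu pirr uu; split.
- by rewrite mulf_neq0 //; apply: contraTneq uu => ->; rewrite unitr0.
- by rewrite unitrMl.
move=> a b e.
have : p = a * (b * u^-1) by rewrite mulrA -e mulrK.
move/pirr => [] ; first by left.
by rewrite unitrMl ?unitrV //; right.
Qed.

Lemma dvd_prod (R : comNzRingType) (y : R) (s : seq R) :
  y \in s -> dvd y (\prod_(x <- s) x).
Proof. by move=> ys; rewrite (big_rem y) //=; eexists. Qed.

Lemma prod_nil_unit (R : comUnitRingType) (s : seq R) :
  (\prod_(x <- s) x) \isn't a GRing.unit -> (0 < size s)%N.
Proof. by case: s => //; rewrite big_nil unitr1. Qed.

Lemma irr_prime (R : idomainType) (hR : is_UFD R) (p : R) :
  irreducible_elt p -> prime_elt p.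
Proof.
move=> pirr; have [p0 pu _] := pirr; split => // a b [c hc].
have [->|a0] := eqVneq a 0; first by left; apply: dvd0.
have [->|b0] := eqVneq b 0; first by right; apply: dvd0.
case: (boolP (a \is a GRing.unit)) => ua.
  by right; exists (a^-1 * c); rewrite mulrCA -hc mulrA mulVr ?mul1r.
case: (boolP (b \is a GRing.unit)) => ub.
  by left; exists (b^-1 * c); rewrite mulrCA -hc mulrCA mulVr ?mulr1.
have [sa [ia ea]] := hR.1 a a0 ua.
have [sb [ib eb]] := hR.1 b b0 ub.
have c0 : c != 0 by apply: contraTneq (mulf_neq0 a0 b0) => c0; rewrite hc c0 mulr0 eqxx.
have iab : forall y, y \in sa ++ sb -> irreducible_elt y.
  by move=> y; rewrite mem_cat => /orP [/ia|/ib].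
have eab : a * b = \prod_(x <- sa ++ sb) x by rewrite big_cat /= -ea -eb.
have na := prod_nil_unit (s := sa); have nb := prod_nil_unit (s := sb).
rewrite -ea in na; rewrite -eb in nb.
have := na ua; have := nb ub => {na nb} na nb.
case: (boolP (c \is a GRing.unit)) => uc.
  have pc := irr_unit pirr uc.
  have i1 : forall y, y \in [:: p * c] -> irreducible_elt y.
    by move=> y; rewrite inE => /eqP ->.
  have e1 : \prod_(x <- sa ++ sb) x = \prod_(x <- [:: p * c]) x.
    by rewrite big_seq1 -eab hc.
  have [hsz _] := hR.2 (sa ++ sb) [:: p * c] iab i1 e1.
  by move: hsz na nb; rewrite size_cat; case: (sa) => // x sa'; case: (sb) => // y sb'; rewrite /= addSn addnS.
have [sc [ic ec]] := hR.1 c c0 uc.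
have ips : forall y, y \in p :: sc -> irreducible_elt y.
  by move=> y; rewrite inE => /orP [/eqP ->|/ic].
have e2 : \prod_(x <- p :: sc) x = \prod_(x <- sa ++ sb) x.
  by rewrite big_cons -ec -hc eab.
have [hsz [sigma hsig]] := hR.2 (p :: sc) (sa ++ sb) ips iab e2.
have := hsig (@ord0 (size sc)); rewrite /= => -[u uu hu].
set k := sigma _ in hu.
have hk : (k < size (sa ++ sb))%N by rewrite -hsz ltn_ord.
have := mem_nth 0 hk; rewrite mem_cat => /orP [] hy.
  left; have [m hm] := dvd_prod hy; rewrite -ea in hm.
  by exists (u^-1 * m); rewrite hm hu [u * _]mulrC -mulrA [u * _]mulrA mulrV // mul1r.
right; have [m hm] := dvd_prod hy; rewrite -eb in hm.
by exists (u^-1 * m); rewrite hm hu [u * _]mulrC -mulrA [u * _]mulrA mulrV // mul1r.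
Qed.

Definition primitive (R : idomainType) (W : {poly {poly R}}) :=
  forall pi, irreducible_elt pi -> ~ dvd (const2 pi) W.

Lemma coef_const2M (R : comNzRingType) (pi : R) (W : {poly {poly R}}) i j :
  (const2 pi * W)`_i`_j = pi * W`_i`_j.
Proof. by rewrite /const2 !coefCM. Qed.

Lemma const2M (R : comNzRingType) (a b : R) : const2 (a * b) = const2 a * const2 b.
Proof. by rewrite /const2 !polyCM. Qed.

Lemma dvd_unit (R : comUnitRingType) (x y : R) :
  dvd x y -> y \is a GRing.unit -> x \is a GRing.unit.
Proof. by case=> c ->; rewrite unitrM => /andP []. Qed.

Lemma unit_prim (R : idomainType) (W : {poly {poly R}}) i j :
  W`_i`_j \is a GRing.unit -> primitive W.
Proof.
move=> u pi [_ pu _] [G hG]; move: u; rewrite hG coef_const2M => u.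
by move: pu; rewrite (dvd_unit _ u) //; exists G`_i`_j.
Qed.

Lemma prim_dec (R : idomainType) (hR : is_UFD R) (V : {poly {poly R}}) :
  V != 0 -> exists c W, [/\ c != 0, V = const2 c * W & primitive W].
Proof.
move=> V0.
set i := (size V).-1; set j := (size V`_i).-1.
have v0 : V`_i`_j != 0 by rewrite /j /i -!lead_coefE !lead_coef_eq0.
have main : forall n (W : {poly {poly R}}), W`_i`_j != 0 ->
   (W`_i`_j \is a GRing.unit \/ exists s, [/\ (forall y, y \in s -> irreducible_elt y),
        W`_i`_j = \prod_(y <- s) y & (size s <= n)%N]) ->
   exists c W', [/\ c != 0, W = const2 c * W' & primitive W'].
  have done1 : forall W : {poly {poly R}}, primitive W ->
      exists c W', [/\ c != 0, W = const2 c * W' & primitive W'].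
    by move=> W pW; exists 1, W; split => //; [exact: oner_neq0 | rewrite /const2 !polyC1 mul1r].
  elim=> [|n IH] W w0 [wu|[s [hs es ss]]]; try exact/done1/(unit_prim wu).
    by apply/done1/(@unit_prim _ _ i j); move: ss; rewrite leqn0 size_eq0 => /eqP s0;
       rewrite es s0 big_nil unitr1.
  case: (classic (primitive W)) => [|npW]; first exact: done1.
  have [pi [ipi [W1 eW]]] : exists pi, irreducible_elt pi /\ dvd (const2 pi) W.
    by apply: NNPP => h; apply: npW => pi ipi hd; apply: h; exists pi.
  have ew : W`_i`_j = pi * W1`_i`_j by rewrite eW coef_const2M.
  have w10 : W1`_i`_j != 0 by apply: contraNneq w0 => h; rewrite ew h mulr0.
  case: (boolP (W1`_i`_j \is a GRing.unit)) => u1.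
    exists pi, W1; split => //; last exact: (unit_prim u1).
    by case: ipi.
  have [s1 [is1 es1]] := hR.1 _ w10 u1.
  have ips : forall y, y \in pi :: s1 -> irreducible_elt y.
    by move=> y; rewrite inE => /orP [/eqP ->|/is1].
  have e2 : \prod_(x <- pi :: s1) x = \prod_(x <- s) x by rewrite big_cons -es1 -ew es.
  have [hsz _] := hR.2 _ _ ips hs e2.
  have ss1 : (size s1 <= n)%N by move: ss; rewrite -hsz.
  have [c1 [W' [c10 eW1 pW']]] := IH W1 w10 (or_intror (ex_intro _ s1 (And3 is1 es1 ss1))).
  exists (pi * c1), W'; split => //.
    by rewrite mulf_neq0 //; case: ipi.
  by rewrite eW eW1 const2M mulrA.
have [vu|vnu] := boolP (V`_i`_j \is a GRing.unit).
  by apply: (main 0%N) => //; left.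
have [s [hs es]] := hR.1 _ v0 vnu.
by apply: (main (size s)) => //; right; exists s.
Qed.


Lemma KL (R : idomainType) (pi : R) (hp : prime_elt pi) (W : {poly {poly R}})
  (hW0 : W`_0`_0 = 0) (hWp : ~ dvd (const2 pi) W) (q : {poly R}) :
  dvd (const2 pi) ((cmap q).[W]) -> dvd pi%:P q.
Proof.
have hp2 : prime_elt (const2 pi) := gauss (gauss hp).
elim/poly_ind: q => [|q c IH]; first by move=> _; exists 0; rewrite mulr0.
rewrite cmapMXaddC hornerMXaddC => -[G hG].
set A := (cmap q).[W] in hG IH.
have [c' hc'] : dvd pi c.
  exists G`_0`_0; have := congr1 (fun P : {poly {poly R}} => P`_0`_0) hG.
  by rewrite /= coefD coef0M coefD coef0M hW0 mulr0 add0r /const2 !coefC /= => ->; rewrite coefCM coefCM.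
have hAW : dvd (const2 pi) (A * W).
  by exists (G - const2 c'); rewrite mulrBr -hG hc' const2M addrK.
case: (hp2.2 _ _ hAW) => // /IH [g hg].
by exists (g * 'X + c'%:P); rewrite hg hc' mulrDr polyCM mulrA.
Qed.
Lemma frac_repr (R : idomainType) (x : {fraction R}) : exists n d, d != 0 /\ x * tofrac d = tofrac n.
Proof.
elim/quotW: x => r. exists \n_r, \d_r; split; first exact: denom_ratioP.
have -> : forall a b : {fraction R}, a * b = FracField.mul a b by [].
rewrite !piE. apply/eqmodP. rewrite /= FracField.equivfE /FracField.mulf /= !numden_Ratio ?mulf_neq0 ?oner_eq0 //.
- by rewrite !mulr1 mulrC.
all: exact: denom_ratioP.
Qed.

Lemma common_den (R : idomainType) (p : {poly {fraction R}}) :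
  exists d q, d != 0 /\ p * (tofrac d)%:P = map_poly (@tofrac R) q.
Proof.
elim/poly_ind: p => [|p c [d1 [q1 [d10 IH]]]].
  by exists 1, 0; rewrite oner_neq0 mul0r rmorph0.
have [n [b [b0 hb]]] := frac_repr c.
exists (d1 * b), (q1 * 'X * b%:P + (n * d1)%:P); split; first by rewrite mulf_neq0.
rewrite rmorphD !rmorphM /= map_polyX !map_polyC /= -IH -hb polyCM.
ring.
Qed.

Lemma embed2D (R : idomainType) (x y : {poly {poly R}}) : embed2 (x + y) = embed2 x + embed2 y.
Proof. by rewrite /embed2 rmorphD. Qed.
Lemma embed2N (R : idomainType) (x : {poly {poly R}}) : embed2 (- x) = - embed2 x.
Proof. by rewrite /embed2 rmorphN. Qed.
Lemma embed2M (R : idomainType) (x y : {poly {poly R}}) : embed2 (x * y) = embed2 x * embed2 y.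
Proof. exact: (rmorphM (map_poly (map_poly (@tofrac R)) : {rmorphism _ -> _})). Qed.
Lemma embed2_const2 (R : idomainType) (r : R) : embed2 (const2 r) = const2 (tofrac r).
Proof. by rewrite /embed2 /const2 map_polyC /= map_polyC. Qed.
Lemma embed2_inj (R : idomainType) : injective (@embed2 R).
Proof.
apply: map_inj_poly; last by rewrite rmorph0.
apply: map_inj_poly; last by rewrite rmorph0.
by move=> x y /eqP; rewrite tofrac_eq => /eqP.
Qed.
Lemma embed2_horner (R : idomainType) (q : {poly R}) W :
  embed2 ((cmap q).[W]) = (cmap (map_poly (@tofrac R) q)).[embed2 W].
Proof.
apply: horner_cmap_morph; [exact: embed2D | exact: embed2M | exact: embed2_const2].
Qed.

Section Adj.
Variables (S : comNzRingType) (t : {poly {poly S}}).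
Local Notation Ad := (adjoin (@consts2 S) t).
Lemma adjC k : Ad (const2 k).
Proof. by apply/adjoin_constsP; exists k%:P; rewrite cmapC hornerC. Qed.
Lemma adjT : Ad t.
Proof. by apply/adjoin_constsP; exists 'X; rewrite /cmap !map_polyX hornerX. Qed.
Lemma adjD x y : Ad x -> Ad y -> Ad (x + y).
Proof.
move=> /adjoin_constsP [p ->] /adjoin_constsP [q ->].
by apply/adjoin_constsP; exists (p + q); rewrite cmapD hornerD.
Qed.
Lemma adjN x : Ad x -> Ad (- x).
Proof.
move=> /adjoin_constsP [p ->].
by apply/adjoin_constsP; exists (- p); rewrite cmapN hornerN.
Qed.
Lemma adjM x y : Ad x -> Ad y -> Ad (x * y).
Proof.
move=> /adjoin_constsP [p ->] /adjoin_constsP [q ->].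
by apply/adjoin_constsP; exists (p * q); rewrite cmapM hornerM.
Qed.
Lemma adj0 : Ad 0.
Proof. by have := adjC 0; rewrite /const2 !polyC0. Qed.
End Adj.

Lemma adj_trans (S : comNzRingType) (t s : {poly {poly S}}) :
  adjoin (@consts2 S) s t -> forall g, adjoin (@consts2 S) t g -> adjoin (@consts2 S) s g.
Proof.
move=> /adjoin_constsP [r ->] g /adjoin_constsP [p ->].
apply/adjoin_constsP; exists (p \Po r).
by rewrite !cmapE map_comp_poly comp_polyA.
Qed.

Theorem lemma5p1 (R : idomainType) (hR : is_UFD R) (U : {poly {poly R}})
  (hU : is_poly_ring_over
          (adjoin (@consts2 {fraction R}) (embed2 U))
          (fun _ => True)) :
  inert_subring (fun f : {poly {poly R}} =>
                   adjoin (@consts2 {fraction R}) (embed2 U) (embed2 f)) /\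
  exists W : {poly {poly R}},
    [/\ forall f : {poly {poly R}},
          adjoin (@consts2 {fraction R}) (embed2 U) (embed2 f) <->
          adjoin (@consts2 R) W f,
        transcendental_over (@consts2 R) W &
        forall g : {poly {poly {fraction R}}},
          adjoin (@consts2 {fraction R}) (embed2 W) g <->
          adjoin (@consts2 {fraction R}) (embed2 U) g].
Proof.
have [T [hTall hTtr]] := hU.
have nc : forall k, embed2 U <> const2 k.
  move=> k ek.
  have consts_of : forall P, coefs_in (adjoin (@consts2 _) (embed2 U)) P ->
      coefs_in (@consts2 _) P.
    move=> P hP i; have /adjoin_constsP [p ->] := hP i.
    by rewrite ek; exists p.[k]; apply: (horner_cmap_const (S := {fraction R})).
  have [P hP eP] := (hTall ('X%:P)).1 I.
  have [Q hQ eQ] := (hTall 'X).1 I.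
  rewrite (coefs_cmap (consts_of _ hP)) in eP.
  rewrite (coefs_cmap (consts_of _ hQ)) in eQ.
  exact: (no_two (esym eP) (esym eQ)).
set u0 := U`_0`_0.
have V0 : U - const2 u0 != 0.
  apply/eqP => hV; apply: (nc (tofrac u0)).
  have -> : U = const2 u0 by apply/eqP; rewrite -subr_eq0 hV.
  exact: embed2_const2.
have [c [W [c0 eV pW]]] := prim_dec hR V0.
have W00 : W`_0`_0 = 0.
  have := congr1 (fun P : {poly {poly R}} => P`_0`_0) eV.
  rewrite /= coef_const2M coefB coefB /const2 !coefC /= subrr => /esym/eqP.
  by rewrite mulf_eq0 (negbTE c0) => /eqP.
have W0 : W != 0 by apply: contraNneq V0 => h; rewrite eV h mulr0.
have Wnc : W != const2 (W`_0`_0) by rewrite W00 /const2 !polyC0.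
have eU_W : embed2 U = const2 (tofrac u0) + const2 (tofrac c) * embed2 W.
  have -> : U = const2 u0 + const2 c * W by rewrite -eV addrC subrK.
  by rewrite embed2D embed2M !embed2_const2.
have cF0 : tofrac c != 0 by rewrite tofrac_eq0.
have KWU : forall g, adjoin (@consts2 _) (embed2 W) g <-> adjoin (@consts2 _) (embed2 U) g.
  move=> g; split; apply: adj_trans.
  have -> : embed2 W = const2 (tofrac c)^-1 * (embed2 U - const2 (tofrac u0)).
      by rewrite eU_W [const2 (tofrac u0) + _]addrC addrK mulrA -const2M mulVf // /const2 !polyC1 mul1r.
    by apply: adjM; [apply: adjC | apply: adjD; [apply: adjT | apply/adjN/adjC]].
  by rewrite eU_W; apply: adjD; [apply: adjC | apply: adjM; [apply: adjC | apply: adjT]].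
have trW : transcendental_over (@consts2 R) W.
  move=> P hP; rewrite (coefs_cmap hP) => /(transc_nonconst Wnc) ->.
  by rewrite /cmap !rmorph0.
set CU := adjoin (@consts2 _) (embed2 U).
have CU0 : CU 0 by apply: adj0.
split.
  split.
  - by rewrite /embed2 rmorph1 -[1](@polyC1 {poly {fraction R}}) -polyC1; apply: adjC.
  - by move=> x y hx hy; rewrite embed2D embed2N; apply: adjD => //; apply: adjN.
  - by move=> x y hx hy; rewrite embed2M; apply: adjM.
  move=> x y hxy nz; rewrite embed2M in hxy.
  have nz' : embed2 x * embed2 y != 0.
    by rewrite -embed2M; apply/eqP => h; move/eqP: nz; apply; apply: embed2_inj; rewrite h /embed2 rmorph0.
  exact: (inert_adj CU0 (@adjD _ _) (@adjN _ _) (@adjM _ _) hTtr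
            ((hTall _).1 I) ((hTall _).1 I) hxy nz').
exists W; split => //.
move=> f; split; last first.
  move=> /adjoin_constsP [q ->]; apply/KWU; rewrite embed2_horner.
  by apply/adjoin_constsP; eexists.
move=> /KWU /adjoin_constsP [p ep].
have [d [q [d0 ed]]] := common_den p.
have e1 : const2 d * f = (cmap q).[W].
  apply: embed2_inj; rewrite embed2M embed2_const2 ep embed2_horner -ed.
  by rewrite cmapM cmapC hornerM hornerC mulrC.
have desc : forall s, (forall y, y \in s -> irreducible_elt y) ->
    forall q, const2 (\prod_(y <- s) y) * f = (cmap q).[W] -> adjoin (@consts2 R) W f.
  elim=> [|pi s IH] hs q0 e.
    by move: e; rewrite big_nil /const2 !polyC1 mul1r => ->; apply/adjoin_constsP; eexists.
  have ipi : irreducible_elt pi by apply: hs; rewrite inE eqxx.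
  have [/eqP pi0 _ _] := ipi.
  move: e; rewrite big_cons const2M -mulrA => e.
  have : dvd (const2 pi) ((cmap q0).[W]) by rewrite -e; eexists.
  move/(KL (irr_prime hR ipi) W00 (pW _ ipi)) => [q' eq'].
  apply: (IH _ q'); first by move=> y ys; apply: hs; rewrite inE ys orbT.
  apply: (@mulfI _ (const2 pi)); first by rewrite /const2 !polyC_eq0; apply/eqP.
  by rewrite e eq' cmapM cmapC hornerM hornerC mulrC.
case: (boolP (d \is a GRing.unit)) => du.
  apply/adjoin_constsP; exists (d^-1%:P * q).
  rewrite cmapM cmapC hornerM hornerC -e1 mulrA -const2M mulVr //.
  by rewrite /const2 !polyC1 mul1r.
have [s [hs es]] := hR.1 d d0 du.
by apply: (desc s hs q); rewrite -es.
Qed.
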